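(* Let $(L,[\cdot,\cdot],\cdot,\alpha)$ be a multiplicative Hom-post-Lie algebra. Then $(L\otimes L,\alpha\otimes\alpha)$ is a module over $L$ with the actions $x\diamond(y\otimes z)=[\alpha(x),y]\otimes\alpha(z)+\alpha(y)\otimes[\alpha(x),z]$ and $x\bullet(y\otimes z)=(\alpha(x)\cdot y)\otimes\alpha(z)+\alpha(y)\otimes(\alpha(x)\cdot z)$, for $x,y,z\in L$.
   Context: All vector spaces are over a field $\mathbb{K}$ of characteristic $\neq 2$. A Hom-Lie algebra is $(L,[\cdot,\cdot],\alpha)$ with $[\cdot,\cdot]$ bilinear skew-symmetric, $\alpha$ linear, and $[\alpha(x),[y,z]]+[\alpha(y),[z,x]]+[\alpha(z),[x,y]]=0$. A Hom-post-Lie algebra $(L,[\cdot,\cdot],\cdot,\alpha)$ is a Hom-Lie algebra with bilinear $\cdot$ such that $\alpha(z)\cdot[x,y]-[z\cdot x,\alpha(y)]-[\alpha(x),z\cdot y]=0$ and $\alpha(z)\cdot(y\cdot x)-\alpha(y)\cdot(z\cdot x)+(y\cdot z)\cdot\alpha(x)-(z\cdot y)\cdot\alpha(x)+[y,z]\cdot\alpha(x)=0$ for all $x,y,z$; it is multiplicative if $\alpha([x,y])=[\alpha(x),\alpha(y)]$ and $\alpha(x\cdot y)=\alpha(x)\cdot\alpha(y)$. A module over $L$ is a vector space $M$ with linear $\alpha_M$ and bilinear $\diamond,\bullet:L\otimes M\to M$ such that for all $x,y\in L,m\in M$: (i) $\alpha_M(x\diamond m)=\alpha(x)\diamond\alpha_M(m)$,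 $\alpha_M(x\bullet m)=\alpha(x)\bullet\alpha_M(m)$; (ii) $[x,y]\diamond\alpha_M(m)=\alpha(x)\diamond(y\diamond m)-\alpha(y)\diamond(x\diamond m)$; (iii) $(x\cdot y)\diamond\alpha_M(m)=\alpha(x)\bullet(y\diamond m)-\alpha(y)\diamond(x\bullet m)$; (iv) $[x,y]\bullet\alpha_M(m)=\alpha(x)\bullet(y\bullet m)-\alpha(y)\bullet(x\bullet m)-(x\cdot y)\bullet\alpha_M(m)+(y\cdot x)\bullet\alpha_M(m)$. *)

(* Defs.v *)
From HB Require Import structures.
From mathcomp Require Import all_boot all_algebra.
Set Implicit Arguments. Unset Strict Implicit. Unset Printing Implicit Defensive.
Import GRing.Theory.
Local Open Scope ring_scope.

Definition bilinear_map (K : fieldType) (U V W : lmodType K) (f : U -> V -> W) : Prop :=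
  (forall u, linear (f u)) /\ (forall v, linear (fun u => f u v)).

Definition HomLie (K : fieldType) (L : lmodType K)
  (br : L -> L -> L) (alpha : L -> L) : Prop :=
  [/\ bilinear_map br,
      (forall x y, br x y = - br y x),
      linear alpha &
      (forall x y z,
        br (alpha x) (br y z) + br (alpha y) (br z x) + br (alpha z) (br x y) = 0)].

Definition HomPostLie (K : fieldType) (L : lmodType K)
  (br dot : L -> L -> L) (alpha : L -> L) : Prop :=
  [/\ HomLie br alpha,
      bilinear_map dot,
      (forall x y z,
        dot (alpha z) (br x y) - br (dot z x) (alpha y) - br (alpha x) (dot z y) = 0) &
      (forall x y z,
        dot (alpha z) (dot y x) - dot (alpha y) (dot z x)
        + dot (dot y z) (alpha x) - dot (dot z y) (alpha x)
        + dot (br y z) (alpha x) = 0)].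

Definition HomPostLie_multiplicative (K : fieldType) (L : lmodType K)
  (br dot : L -> L -> L) (alpha : L -> L) : Prop :=
  (forall x y, alpha (br x y) = br (alpha x) (alpha y)) /\
  (forall x y, alpha (dot x y) = dot (alpha x) (alpha y)).

Definition HomPostLieModule (K : fieldType) (L : lmodType K)
  (br dot : L -> L -> L) (alpha : L -> L)
  (M : lmodType K) (alphaM : M -> M) (dia bul : L -> M -> M) : Prop :=
  [/\ linear alphaM, bilinear_map dia & bilinear_map bul] /\
  [/\ (forall x m, alphaM (dia x m) = dia (alpha x) (alphaM m)
                   /\ alphaM (bul x m) = bul (alpha x) (alphaM m)),
      (forall x y m, dia (br x y) (alphaM m)
                     = dia (alpha x) (dia y m) - dia (alpha y) (dia x m)),
      (forall x y m, dia (dot x y) (alphaM m)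
                     = bul (alpha x) (dia y m) - dia (alpha y) (bul x m)) &
      (forall x y m, bul (br x y) (alphaM m)
                     = bul (alpha x) (bul y m) - bul (alpha y) (bul x m)
                       - bul (dot x y) (alphaM m) + bul (dot y x) (alphaM m))].

(* (T, tens) is a tensor product L (x) L, characterized by its universal
   property: tens is bilinear and every bilinear map out of L x L factors
   uniquely through a linear map out of T. *)
Definition is_tensor_product (K : fieldType) (L T : lmodType K)
  (tens : L -> L -> T) : Prop :=
  bilinear_map tens /\
  forall (W : lmodType K) (f : L -> L -> W), bilinear_map f ->
    exists g : T -> W, (linear g /\ forall y z, g (tens y z) = f y z) /\
      forall g' : T -> W, linear g' -> (forall y z, g' (tens y z) = f y z) ->
        forall t, g' t = g t.

(* Main.v *)
Require Import Defs.
From HB Require Import structures.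
From mathcomp Require Import all_boot all_algebra.
Import GRing.Theory.
Local Open Scope ring_scope.

Section Aux.
Set Implicit Arguments.
Variable K : fieldType.

Lemma lin_D (U V : lmodType K) (f : U -> V) : linear f ->
  forall u v, f (u + v) = f u + f v.
Proof. by move=> hf u v; have := hf 1 u v; rewrite !scale1r. Qed.

Lemma lin_0 (U V : lmodType K) (f : U -> V) : linear f -> f 0 = 0.
Proof.
move=> hf; have h := hf 1 0 0; rewrite !scale1r addr0 in h.
by apply: (@addrI _ (f 0)); rewrite addr0 -h.
Qed.

Lemma lin_Z (U V : lmodType K) (f : U -> V) : linear f ->
  forall c u, f (c *: u) = c *: f u.
Proof. by move=> hf c u; have := hf c u 0; rewrite !addr0 (lin_0 hf) addr0. Qed.

Lemma lin_N (U V : lmodType K) (f : U -> V) : linear f ->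
  forall u, f (- u) = - f u.
Proof. by move=> hf u; rewrite -scaleN1r (lin_Z hf) scaleN1r. Qed.

Lemma lin_B (U V : lmodType K) (f : U -> V) : linear f ->
  forall u v, f (u - v) = f u - f v.
Proof. by move=> hf u v; rewrite (lin_D hf) (lin_N hf). Qed.

Lemma lin_comp (U V W : lmodType K) (f : V -> W) (g : U -> V) :
  linear f -> linear g -> linear (fun t => f (g t)).
Proof. by move=> hf hg a u v; rewrite hg hf. Qed.

Lemma lin_add (U V : lmodType K) (f g : U -> V) :
  linear f -> linear g -> linear (fun t => f t + g t).
Proof. by move=> hf hg a u v; rewrite hf hg scalerDr addrACA. Qed.

Lemma lin_opp (U V : lmodType K) (f : U -> V) :
  linear f -> linear (fun t => - f t).
Proof. by move=> hf a u v; rewrite hf opprD scalerN. Qed.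

Lemma lin_scale (U V : lmodType K) (c : K) (f : U -> V) :
  linear f -> linear (fun t => c *: f t).
Proof. by move=> hf a u v; rewrite hf scalerDr !scalerA mulrC. Qed.

Lemma tens_ext (L T W : lmodType K) (tens : L -> L -> T)
  (hT : is_tensor_product tens) (g1 g2 : T -> W) :
  linear g1 -> linear g2 -> (forall y z, g1 (tens y z) = g2 (tens y z)) ->
  forall t, g1 t = g2 t.
Proof.
case: hT => [[ht1 ht2] hU] h1 h2 E.
have hb : bilinear_map (fun y z => g1 (tens y z)).
  split=> [u|v] a p q /=.
  - by rewrite (ht1 u) h1.
  - by have := ht2 v a p q => /= ->; rewrite h1.
have [g [_ hg]] := hU W _ hb.
move=> t; rewrite (hg g1 h1 (fun _ _ => erefl)).
by rewrite (hg g2 h2 (fun y z => esym (E y z))).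
Qed.

Lemma rearr1 (V : zmodType) (A1 A2 B1 B2 X Y : V) :
  (A1 + X + (Y + B1)) - (A2 + Y + (X + B2)) = (A1 - A2) + (B1 - B2).
Proof.
have -> : A1 + X + (Y + B1) = (A1 + B1) + (X + Y) by rewrite (addrC Y) addrACA.
have -> : A2 + Y + (X + B2) = (A2 + B2) + (X + Y) by rewrite (addrC X B2) addrACA (addrC Y).
by rewrite opprD addrACA subrr addr0 opprD addrACA.
Qed.
Lemma rearr2 (V : zmodType) (A1 A2 B1 B2 X Y C1 C2 D1 D2 : V) :
  (A1 + X + (Y + B1)) - (A2 + Y + (X + B2)) - (C1 + D1) + (C2 + D2)
  = (A1 - A2 - C1 + C2) + (B1 - B2 - D1 + D2).
Proof.
rewrite rearr1 opprD [X in X + (C2 + D2)]addrACA. by rewrite (addrACA (A1 - A2 - C1)).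
Qed.

Lemma rearr3 (V : lmodType K) (c : K) (a b d e : V) :
  c *: a + b + (c *: d + e) = c *: (a + d) + (b + e).
Proof. by rewrite scalerDr addrACA. Qed.

End Aux.


Theorem mainTheorem4 (K : fieldType) (hK : (2%:R : K) != 0)
  (L : lmodType K) (br dot : L -> L -> L) (alpha : L -> L)
  (hL : HomPostLie br dot alpha) (hmult : HomPostLie_multiplicative br dot alpha)
  (T : lmodType K) (tens : L -> L -> T) (hT : is_tensor_product tens)
  (alphaT : T -> T) (dia bul : L -> T -> T)
  (halphaT_lin : linear alphaT)
  (halphaT : forall y z, alphaT (tens y z) = tens (alpha y) (alpha z))
  (hdia_lin : forall x, linear (dia x))
  (hdia : forall x y z,
     dia x (tens y z) = tens (br (alpha x) y) (alpha z) + tens (alpha y) (br (alpha x) z))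
  (hbul_lin : forall x, linear (bul x))
  (hbul : forall x y z,
     bul x (tens y z) = tens (dot (alpha x) y) (alpha z) + tens (alpha y) (dot (alpha x) z)) :
  HomPostLieModule br dot alpha alphaT dia bul.
Proof.
case: hL => [[[brl brr] brskew alin jac] [dotl dotr] ax3 ax4].
case: hmult => [mbr mdot].
have [[tl tr] _] := hT.
have aD : forall c p q, alpha (c *: p + q) = c *: alpha p + alpha q := alin.
have brL1 : forall c p q v, br (c *: p + q) v = c *: br p v + br q v :=
  fun c p q v => brr v c p q.
have dotL1 : forall c p q v, dot (c *: p + q) v = c *: dot p v + dot q v :=
  fun c p q v => dotr v c p q.
have tL1 : forall c p q v, tens (c *: p + q) v = c *: tens p v + tens q v :=
  fun c p q v => tr v c p q.
have tL2 : forall c p q v, tens v (c *: p + q) = c *: tens v p + tens v q :=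
  fun c p q v => tl v c p q.
have tB1 : forall p q v, tens (p - q) v = tens p v - tens q v :=
  fun p q v => lin_B (tr v) p q.
have tB2 : forall p q v, tens v (p - q) = tens v p - tens v q :=
  fun p q v => lin_B (tl v) p q.
have tD1 : forall p q v, tens (p + q) v = tens p v + tens q v :=
  fun p q v => lin_D (tr v) p q.
have tD2 : forall p q v, tens v (p + q) = tens v p + tens v q :=
  fun p q v => lin_D (tl v) p q.
have diaD : forall x s t, dia x (s + t) = dia x s + dia x t :=
  fun x => lin_D (hdia_lin x).
have bulD : forall x s t, bul x (s + t) = bul x s + bul x t :=
  fun x => lin_D (hbul_lin x).
have aTD : forall s t, alphaT (s + t) = alphaT s + alphaT t := lin_D halphaT_lin.
have jacK : forall p q u, br (alpha p) (br q u) - br (alpha q) (br p u)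
                          = br (br p q) (alpha u).
  move=> p q u; have h := jac p q u.
  rewrite (brskew u p) (lin_N (brl _)) (brskew (alpha u)) in h.
  by apply/eqP; rewrite -subr_eq0 h.
have ax3K : forall p q u, dot (alpha p) (br q u) - br (alpha q) (dot p u)
                          = br (dot p q) (alpha u).
  move=> p q u; have h := ax3 q u p.
  by apply/eqP; rewrite -subr_eq0 addrAC h.
have ax4K : forall p q u, dot (alpha p) (dot q u) - dot (alpha q) (dot p u)
      - dot (dot p q) (alpha u) + dot (dot q p) (alpha u) = dot (br p q) (alpha u).
  move=> p q u; have h := ax4 u q p.
  rewrite (brskew q p) (lin_N (dotr _)) in h.
  by apply/eqP; rewrite -subr_eq0 (addrAC (dot (alpha p) (dot q u) - dot (alpha q) (dot p u))) h.
have tc1 : forall P Q R S w, tens (P - Q - R + S) w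
                           = tens P w - tens Q w - tens R w + tens S w.
  by move=> P Q R S w; rewrite tD1 !tB1.
have tc2 : forall P Q R S w, tens w (P - Q - R + S)
                           = tens w P - tens w Q - tens w R + tens w S.
  by move=> P Q R S w; rewrite tD2 !tB2.
split.
  split => //.
  - split => // v c x1 x2 /=; move: v.
    apply: (@tens_ext K L T T tens hT (fun m => dia (c *: x1 + x2) m)
              (fun m => c *: dia x1 m + dia x2 m)).
    + exact: hdia_lin.
    + exact: (lin_add (lin_scale c (hdia_lin x1)) (hdia_lin x2)).
    + by move=> u v /=; rewrite !hdia aD !brL1 tL1 tL2 rearr3.
  - split => // v c x1 x2 /=; move: v.
    apply: (@tens_ext K L T T tens hT (fun m => bul (c *: x1 + x2) m)
              (fun m => c *: bul x1 m + bul x2 m)).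
    + exact: hbul_lin.
    + exact: (lin_add (lin_scale c (hbul_lin x1)) (hbul_lin x2)).
    + by move=> u v /=; rewrite !hbul aD !dotL1 tL1 tL2 rearr3.
split.
- move=> x m; split; move: m.
  + apply: (@tens_ext K L T T tens hT (fun m => alphaT (dia x m))
              (fun m => dia (alpha x) (alphaT m))).
    * exact: (lin_comp halphaT_lin (hdia_lin x)).
    * exact: (lin_comp (hdia_lin _) halphaT_lin).
    * by move=> u v /=; rewrite hdia aTD !halphaT hdia !mbr.
  + apply: (@tens_ext K L T T tens hT (fun m => alphaT (bul x m))
              (fun m => bul (alpha x) (alphaT m))).
    * exact: (lin_comp halphaT_lin (hbul_lin x)).
    * exact: (lin_comp (hbul_lin _) halphaT_lin).
    * by move=> u v /=; rewrite hbul aTD !halphaT hbul !mdot.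
- move=> x y m; move: m.
  apply: (@tens_ext K L T T tens hT (fun m => dia (br x y) (alphaT m))
     (fun m => dia (alpha x) (dia y m) - dia (alpha y) (dia x m))).
  + exact: (lin_comp (hdia_lin _) halphaT_lin).
  + exact: (lin_add (lin_comp (hdia_lin _) (hdia_lin y))
                    (lin_opp (lin_comp (hdia_lin _) (hdia_lin x)))).
  + move=> u v /=.
    by rewrite halphaT !hdia !diaD !hdia !mbr rearr1 -!tB1 -!tB2 !jacK.
- move=> x y m; move: m.
  apply: (@tens_ext K L T T tens hT (fun m => dia (dot x y) (alphaT m))
     (fun m => bul (alpha x) (dia y m) - dia (alpha y) (bul x m))).
  + exact: (lin_comp (hdia_lin _) halphaT_lin).
  + exact: (lin_add (lin_comp (hbul_lin _) (hdia_lin y))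
                    (lin_opp (lin_comp (hdia_lin _) (hbul_lin x)))).
  + move=> u v /=.
    by rewrite halphaT !hdia !hbul !diaD !bulD !hdia !hbul !mbr !mdot rearr1 -!tB1 -!tB2 !ax3K.
- move=> x y m; move: m.
  apply: (@tens_ext K L T T tens hT (fun m => bul (br x y) (alphaT m))
     (fun m => bul (alpha x) (bul y m) - bul (alpha y) (bul x m)
               - bul (dot x y) (alphaT m) + bul (dot y x) (alphaT m))).
  + exact: (lin_comp (hbul_lin _) halphaT_lin).
  + apply: lin_add; last exact: (lin_comp (hbul_lin _) halphaT_lin).
    apply: lin_add; last exact: (lin_opp (lin_comp (hbul_lin _) halphaT_lin)).
    exact: (lin_add (lin_comp (hbul_lin _) (hbul_lin y))
                    (lin_opp (lin_comp (hbul_lin _) (hbul_lin x)))).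
  + move=> u v /=.
    by rewrite halphaT !hbul !bulD !hbul !mbr !mdot rearr2 -tc1 -tc2 !ax4K.
Qed.
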